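(* Suppose $T$ has the f.s. dichotomy, and let $\bar a,\bar b$ be finite tuples, $c$ a singleton, and $M\preceq\mathbb{C}$ a small model. (1) If $\mathrm{tp}(\bar a/Mc)$ and $\mathrm{tp}(c/M\bar b)$ are both not finitely satisfied in $M$, then $\mathrm{tp}(\bar a/M\bar b)$ is not finitely satisfied in $M$. (2) $\mathrm{tp}(\bar a/M\bar b)$ is finitely satisfied in $M$ iff $\mathrm{tp}(a/M\bar b)$ is finitely satisfied in $M$ for every element $a$ of $\bar a$. (3) If $C\supseteq M$ is full, then $\mathrm{tp}(\bar a/C\bar b)$ is finitely satisfied in $M$ iff $\mathrm{tp}(a/Cb)$ is finitely satisfied in $M$ for every element $a$ of $\bar a$ and every element $b$ of $\bar b$.
   Context: Work in a monster model $\mathbb{C}$ of $T$. For $B\supseteq M$, $\mathrm{tp}(A/B)$ is finitely satisfied in $M$ if each of its formulas is satisfied by a tuple from $M$. $T$ has the f.s. dichotomy if for every small model $M$ and finite tuples $\bar a,\bar b$ with $\mathrm{tp}(\bar b/M\bar a)$ finitely satisfied in $M$, for every singleton $c$ either $\mathrm{tp}(\bar b/M\bar ac)$ or $\mathrm{tp}(\bar bc/M\bar a)$ is finitely satisfied in $M$. A set $C\supseteq M$ is full if every type in $S_n(M)$, for every $n$, is realized in $C$. *)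

(* Defs.v *)
From Stdlib Require List.
From mathcomp Require Import all_boot.
Set Implicit Arguments. Unset Strict Implicit. Unset Printing Implicit Defensive.

Record signature := Signature {
  fsym : Type; fari : fsym -> nat;
  rsym : Type; rari : rsym -> nat }.

Section Syntax.
Variable L : signature.

Inductive term : Type :=
| Var : nat -> term
| App : forall f : fsym L, ('I_(fari f) -> term) -> term.

(* variables are named by natural numbers; FEx i binds variable i *)
Inductive formula : Type :=
| FFalse : formula
| FEq : term -> term -> formula
| FRel : forall r : rsym L, ('I_(rari r) -> term) -> formula
| FNeg : formula -> formula
| FAnd : formula -> formula -> formula
| FEx : nat -> formula -> formula.

Fixpoint tvars (t : term) : seq nat :=
  match t with
  | Var i => [:: i]
  | App f args => flatten [seq tvars (args i) | i <- enum 'I_(fari f)]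
  end.

Fixpoint fv (phi : formula) : seq nat :=
  match phi with
  | FFalse => [::]
  | FEq t1 t2 => tvars t1 ++ tvars t2
  | FRel r args => flatten [seq tvars (args i) | i <- enum 'I_(rari r)]
  | FNeg phi => fv phi
  | FAnd phi psi => fv phi ++ fv psi
  | FEx i phi => [seq j <- fv phi | j != i]
  end.
End Syntax.

Record structure (L : signature) := Structure {
  dom :> Type;
  fint : forall f : fsym L, ('I_(fari f) -> dom) -> dom;
  rint : forall r : rsym L, ('I_(rari r) -> dom) -> Prop }.

Section Semantics.
Variables (L : signature) (S : structure L).

Fixpoint teval (v : nat -> S) (t : term L) : S :=
  match t with
  | Var i => v i
  | App f args => fint (fun i => teval v (args i))
  end.

Fixpoint sat (v : nat -> S) (phi : formula L) : Prop :=
  match phi with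
  | FFalse => False
  | FEq t1 t2 => teval v t1 = teval v t2
  | FRel r args => rint (fun i => teval v (args i))
  | FNeg phi => ~ sat v phi
  | FAnd phi psi => sat v phi /\ sat v psi
  | FEx i phi => exists x : S, sat (fun j => if j == i then x else v j) phi
  end.
End Semantics.
Arguments sat {L} S v phi.
Arguments teval {L} S v t.

Section Sub.
Variables (L : signature) (C : structure L).

Definition closed_sub (M : C -> Prop) :=
  forall f (args : 'I_(fari f) -> C), (forall i, M (args i)) -> M (fint args).

Definition substr (M : C -> Prop) (HM : closed_sub M) : structure L :=
  @Structure L (sig M)
    (fun f args => exist M (fint (fun i => proj1_sig (args i)))
                          (HM f _ (fun i => proj2_sig (args i))))
    (fun r args => rint (fun i => proj1_sig (args i))).

Definition elementary_sub (M : C -> Prop) :=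
  exists HM : closed_sub M, (exists x, M x) /\
    forall (phi : formula L) (v : nat -> sig M),
      sat (substr HM) v phi <-> sat C (fun j => proj1_sig (v j)) phi.

(* ---------- Cardinalities: K is a type of cardinality kappa ---------- *)
Definition card_lt (A B : Type) :=
  (exists f : A -> B, injective f) /\ ~ (exists g : B -> A, injective g).

Definition small (K : Type) (A : C -> Prop) := card_lt (sig A) K.

Definition small_model (K : Type) (M : C -> Prop) := small K M /\ elementary_sub M.

(* tuples are sequences; the valuation [tval d e] assigns d_j to variable j
   for j < size d and e j to every other variable (parameters). *)
Definition tval (d : seq C) (e : nat -> C) : nat -> C := fun j => nth (e j) d j.

Definition saturated (K : Type) :=
  forall A : C -> Prop, small K A ->
  forall p : formula L -> (nat -> C) -> Prop,
    (forall phi e, p phi e -> forall j, j \in fv phi -> j != 0 -> A (e j)) ->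
    (forall ps : seq (formula L * (nat -> C)),
        (forall q, List.In q ps -> p q.1 q.2) ->
        exists x : C, forall q, List.In q ps -> sat C (tval [:: x] q.2) q.1) ->
    exists x : C, forall phi e, p phi e -> sat C (tval [:: x] e) phi.

Definition automorphism (s : C -> C) :=
  [/\ bijective s,
      (forall f (args : 'I_(fari f) -> C), s (fint args) = fint (fun i => s (args i)))
    & (forall r (args : 'I_(rari r) -> C), rint args <-> rint (fun i => s (args i)))].

Definition strongly_homogeneous (K : Type) :=
  forall A : C -> Prop, small K A ->
  forall f : C -> C,
    (forall phi (v : nat -> C), (forall j, j \in fv phi -> A (v j)) ->
        (sat C v phi <-> sat C (fun j => f (v j)) phi)) ->
    exists s : C -> C, automorphism s /\ forall x, A x -> s x = f x.

(* C is a monster model: kappa-saturated and strongly kappa-homogeneous,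
   with kappa (the cardinality of K) infinite and > |L| *)
Definition monster (K : Type) :=
  [/\ card_lt (fsym L + rsym L + nat) K, saturated K & strongly_homogeneous K].

Definition fs (a : seq C) (B M : C -> Prop) :=
  forall (phi : formula L) (e : nat -> C),
    (forall j, j \in fv phi -> size a <= j -> B (e j)) ->
    sat C (tval a e) phi ->
    exists m : seq C, [/\ size m = size a, (forall x, List.In x m -> M x)
                        & sat C (tval m e) phi].

(* T has the f.s. dichotomy (T = Th(C), C the monster) *)
Definition fs_dichotomy (K : Type) :=
  forall M : C -> Prop, small_model K M ->
  forall a b : seq C,
    fs b (fun x => M x \/ List.In x a) M ->
    forall c : C,
      fs b (fun x => (M x \/ List.In x a) \/ x = c) M \/
      fs (rcons b c) (fun x => M x \/ List.In x a) M.

(* p in S_n(M): a set of formulas phi(x_0..x_{n-1}, e) with parameters from M,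
   complete and consistent (with the elementary diagram, i.e. finitely
   realised in C) *)
Definition complete_type (n : nat) (M : C -> Prop)
    (p : formula L -> (nat -> C) -> Prop) :=
  [/\ (forall phi e, p phi e -> forall j, j \in fv phi -> n <= j -> M (e j)),
      (forall phi e, (forall j, j \in fv phi -> n <= j -> M (e j)) ->
          p phi e \/ p (FNeg phi) e)
    & (forall ps : seq (formula L * (nat -> C)),
        (forall q, List.In q ps -> p q.1 q.2) ->
        exists d : seq C, size d = n /\
          forall q, List.In q ps -> sat C (tval d q.2) q.1)].

Definition realized_in (D : C -> Prop) (n : nat) (p : formula L -> (nat -> C) -> Prop) :=
  exists d : seq C, [/\ size d = n, (forall x, List.In x d -> D x)
                      & forall phi e, p phi e -> sat C (tval d e) phi].

Definition full (M D : C -> Prop) :=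
  forall n p, complete_type n M p -> realized_in D n p.
End Sub.

(* Main.v *)
Require Import Defs.
From Stdlib Require List.
From Stdlib Require Import Classical ClassicalEpsilon FunctionalExtensionality.
From mathcomp Require Import all_boot zify.
From Stdlib Require Import Lia.
Set Implicit Arguments. Unset Strict Implicit. Unset Printing Implicit Defensive.

Section Basic.
Variables (L : signature) (C : structure L).

Definition upd (E : nat -> C) k v := fun j => if j == k then v else E j.

Lemma teval_coin (v w : nat -> C) t :
  (forall j, j \in tvars t -> v j = w j) -> teval C v t = teval C w t.
Proof.
elim: t => [i|f args IH] H /=; first by apply: H; rewrite inE.
congr fint; apply: functional_extensionality => i; apply: IH => j Hj.
apply: H => /=; apply/flatten_mapP; exists i => //; exact: mem_enum.
Qed.

Lemma coin (phi : formula L) : forall (v w : nat -> C),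
  (forall j, j \in fv phi -> v j = w j) -> (sat C v phi <-> sat C w phi).
Proof.
elim: phi => [|t1 t2|r args|phi IH|phi IH1 psi IH2|i phi IH] v w H /=.
- by [].
- rewrite (teval_coin (v:=v) (w:=w)) ?(teval_coin (v:=v) (w:=w) (t:=t2)) //.
  + by move=> j Hj; apply: H; rewrite mem_cat Hj orbT.
  + by move=> j Hj; apply: H; rewrite mem_cat Hj.
- have -> : (fun i => teval C v (args i)) = (fun i => teval C w (args i)) => //.
  apply: functional_extensionality => i; apply: teval_coin => j Hj.
  apply: H => /=; apply/flatten_mapP; exists i => //; exact: mem_enum.
- by rewrite (IH v w H).
- split=> [[A B]|[A B]]; split.
  + by apply/(IH1 v w) => // j Hj; apply: H; rewrite mem_cat Hj.
  + by apply/(IH2 v w) => // j Hj; apply: H; rewrite mem_cat Hj orbT.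
  + by apply/(IH1 v w) => // j Hj; apply: H; rewrite mem_cat Hj.
  + by apply/(IH2 v w) => // j Hj; apply: H; rewrite mem_cat Hj orbT.
- have K x : sat C (fun j => if j == i then x else v j) phi <->
             sat C (fun j => if j == i then x else w j) phi.
    apply: IH => j Hj; case: eqP => // /eqP ne; apply: H.
    by rewrite mem_filter ne.
  by split=> [[x Hx]|[x Hx]]; exists x; apply/(K x).
Qed.

Fixpoint bl (ps : seq (nat * nat)) (phi : formula L) :=
  match ps with
  | [::] => phi
  | (k, s) :: ps' => FEx k (FAnd (FEq (Var L k) (Var L s)) (bl ps' phi))
  end.

Fixpoint ev (ps : seq (nat * nat)) (E : nat -> C) :=
  match ps with
  | [::] => E
  | (k, s) :: ps' => ev ps' (upd E k (E s))
  end.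

Lemma bl_sat ps phi : forall E, (forall p, p \in ps -> p.1 != p.2) ->
  (sat C E (bl ps phi) <-> sat C (ev ps E) phi).
Proof.
elim: ps => [|[k s] ps IH] E H //=.
have ks : s != k by rewrite eq_sym; apply: (H (k, s)); rewrite inE eqxx.
have H' : forall p, p \in ps -> p.1 != p.2 by move=> p Hp; apply: H; rewrite inE Hp orbT.
rewrite eqxx (negbTE ks); split.
- by move=> [x [-> Hx]]; apply/IH.
- by move=> Hx; exists (E s); split => //; apply/IH.
Qed.

Lemma ev_out ps : forall E k, k \notin map fst ps -> ev ps E k = E k.
Proof.
elim: ps => [|[k s] ps IH] E j //=; rewrite inE negb_or => /andP [ne Hj].
by rewrite IH // /upd (negbTE ne).
Qed.

Lemma ev_map (tau rho : nat -> nat) l : forall E,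
  (forall j j', j \in l -> j' \in l -> rho j != tau j') ->
  (forall j j', j \in l -> j' \in l -> tau j = tau j' -> j = j') ->
  forall j, j \in l -> ev [seq (tau i, rho i) | i <- l] E (tau j) = E (rho j).
Proof.
elim: l => [|j0 l IH] E H1 H2 j //=.
have H1' : forall j j', j \in l -> j' \in l -> rho j != tau j'.
  by move=> a b Ha Hb; apply: H1; rewrite inE ?Ha ?Hb orbT.
have H2' : forall j j', j \in l -> j' \in l -> tau j = tau j' -> j = j'.
  by move=> a b Ha Hb; apply: H2; rewrite inE ?Ha ?Hb orbT.
case Hjl: (j \in l) => Hj.
- rewrite IH // /upd (negbTE (H1 _ _ _ _)) // inE ?Hjl ?eqxx ?orbT //.
- move: Hj; rewrite inE Hjl orbF => /eqP ej; subst j.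
  rewrite ev_out; first by rewrite /upd eqxx.
  apply/negP => /mapP [[a b] /mapP [i Hi [-> ->]] /= E'].
  have ei : j0 = i by apply: H2 => //; rewrite inE ?eqxx ?Hi ?orbT.
  by move: Hi; rewrite -ei Hjl.
Qed.

Lemma le_sumn x s : x \in s -> x <= sumn s.
Proof.
elim: s => [|y s IH] //=; rewrite inE => /orP [/eqP ->|H]; first exact: leq_addr.
exact: leq_trans (IH H) (leq_addl _ _).
Qed.

Lemma ren (sigma : nat -> nat) (phi : formula L) :
  exists psi, forall E, sat C E psi <-> sat C (fun j => E (sigma j)) phi.
Proof.
set l := fv phi.
set Z := (sumn (l ++ map sigma l)).+1.
have Hl j : j \in l -> j < Z by move=> Hj; rewrite ltnS le_sumn // mem_cat Hj.
have Hs j : j \in l -> sigma j < Z.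
  by move=> Hj; rewrite ltnS le_sumn // mem_cat (map_f sigma Hj) orbT.
exists (bl ([seq (Z + i, sigma i) | i <- l] ++ [seq (i, Z + i) | i <- l]) phi) => E.
have -> : forall ps1 ps2, bl (ps1 ++ ps2) phi = bl ps1 (bl ps2 phi).
  by elim=> [|[k s] ps IH] ps2 //=; rewrite IH.
rewrite bl_sat; last first.
  move=> p /mapP [i Hi ->] /=; rewrite neq_ltn; apply/orP; right.
  exact: leq_trans (Hs i Hi) (leq_addr _ _).
rewrite bl_sat; last first.
  move=> p /mapP [i Hi ->] /=; rewrite neq_ltn; apply/orP; left.
  by rewrite -{1}(add0n i) ltn_add2r.
apply: coin => j Hj.
rewrite (ev_map (tau := id) (rho := fun i => Z + i)) //; last first.
  move=> a b Ha Hb; rewrite neq_ltn; apply/orP; right.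
  exact: leq_trans (Hl b Hb) (leq_addr _ _).
rewrite (ev_map (tau := fun i => Z + i) (rho := sigma)) //.
- move=> a b Ha Hb; rewrite neq_ltn; apply/orP; left.
  exact: leq_trans (Hs a Ha) (leq_addr _ _).
- by move=> a b _ _ /eqP; rewrite eqn_add2l => /eqP.
Qed.
End Basic.

Lemma In_rcons (T : Type) (s : seq T) y z : List.In z (rcons s y) <-> List.In z s \/ z = y.
Proof.
elim: s => [|x s IH] /=; first by split; [case=> // <-; right | case=> [[]|->]; left].
rewrite IH; tauto.
Qed.

Lemma In_cat (T : Type) (s1 s2 : seq T) z : List.In z (s1 ++ s2) <-> List.In z s1 \/ List.In z s2.
Proof. elim: s1 => [|x s IH] /=; [tauto | rewrite IH; tauto]. Qed.

Lemma In_map_inv (T U : Type) (f : T -> U) s x :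
  List.In x (map f s) -> exists y, List.In y s /\ x = f y.
Proof.
elim: s => [|y s IH] //= [<-|H]; first by exists y; split => //; left.
by have [z [Hz ->]] := IH H; exists z; split => //; right.
Qed.

Lemma In_map (T U : Type) (f : T -> U) s y : List.In y s -> List.In (f y) (map f s).
Proof. by elim: s => [|z s IH] //= [->|H]; [left | right; apply: IH]. Qed.

Lemma nth_or (T : Type) (d : T) s k : nth d s k = d \/ List.In (nth d s k) s.
Proof.
elim: s k => [|x s IH] [|k] /=; try by left.
- by right; left.
- by case: (IH k) => H; [left | right; right].
Qed.

Lemma In_nth_ex (T : Type) (d : T) s z :
  List.In z s -> exists k, k < size s /\ nth d s k = z.
Proof.
elim: s => [|x s IH] //= [<-|H]; first by exists 0.
by have [k [Hk <-]] := IH H; exists k.+1.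
Qed.

Lemma In_mem (T : eqType) (s : seq T) x : List.In x s <-> x \in s.
Proof.
elim: s => [|y s IH] //=; rewrite inE; split.
- by case=> [->|/IH H]; [rewrite eqxx | rewrite H orbT].
- by case/orP => [/eqP ->|/IH H]; [left | right].
Qed.

Definition dec (P : Prop) : bool := if excluded_middle_informative P then true else false.
Lemma decT (P : Prop) : P -> dec P = true.
Proof. by rewrite /dec; case: excluded_middle_informative. Qed.
Lemma decF (P : Prop) : ~ P -> dec P = false.
Proof. by rewrite /dec; case: excluded_middle_informative. Qed.

Notation tv := Defs.tval.
Section FS.
Variables (L : signature) (C : structure L) (M : C -> Prop) (m0 : C) (Mm0 : M m0).

Lemma tv_def (s : seq C) e k : tv s e k = if k < size s then nth m0 s k else e k.
Proof.
rewrite /Defs.tval; case: ifP => H; first exact: set_nth_default.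
by apply: nth_default; rewrite leqNgt H.
Qed.

Lemma fsE (a : seq C) (B : C -> Prop) : (forall x, M x -> B x) ->
  (forall phi e, (forall j, size a <= j -> B (e j)) -> sat C (tv a e) phi ->
   exists m, [/\ size m = size a, (forall x, List.In x m -> M x) & sat C (tv m e) phi]) ->
  fs a B M.
Proof.
move=> MB H phi e Hfv Hs.
pose e2 := fun j => if j \in fv phi then e j else m0.
have E2 s : sat C (tv s e2) phi <-> sat C (tv s e) phi.
  by apply: coin => j Hj; rewrite /Defs.tval /e2 Hj.
have Hp : forall j, size a <= j -> B (e2 j).
  by move=> j Hj; rewrite /e2; case: ifP => Hj'; [exact: Hfv | exact: MB].
have [m [Hm1 Hm2 Hm3]] := H phi e2 Hp (proj2 (E2 a) Hs).
by exists m; split => //; apply/E2.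
Qed.

Lemma fs_mono a B B' : (forall x, B' x -> B x) -> fs a B M -> fs a B' M.
Proof. by move=> H Hfs phi e Hfv; apply: Hfs => j Hj Hj'; apply: H; apply: Hfv. Qed.

Lemma fs_nil B : fs [::] B M.
Proof. by move=> phi e _ Hs; exists [::]. Qed.

Lemma fs_reindex a B a' B' (f : nat -> nat) : (forall x, M x -> B x) ->
  (forall x, M x -> B' x) -> (forall x, B' x -> B x) ->
  (forall i, i < size a' -> f i < size a /\ nth m0 a' i = nth m0 a (f i)) ->
  fs a B M -> fs a' B' M.
Proof.
move=> MB MB' BB Hf Hfs; apply: fsE => // phi e He Hs.
set N := size a; set n' := size a'.
pose sig := fun j => if j < n' then f j else N + j.
pose e' := fun k => if N + n' <= k then e (k - N) else m0.
have key s : size s = N ->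
  (fun j => tv s e' (sig j)) = tv [seq nth m0 s (f i) | i <- iota 0 n'] e.
  move=> Hs'; apply: functional_extensionality => j; rewrite /sig.
  rewrite [RHS]tv_def size_map size_iota; case: ifP => Hj.
  - rewrite (nth_map 0) ?size_iota // nth_iota // add0n tv_def Hs'.
    by have [-> _] := Hf j Hj.
  - rewrite tv_def Hs' ifF; last by lia.
    by rewrite /e' ifT; [congr e; lia | lia].
have Ha' : [seq nth m0 a (f i) | i <- iota 0 n'] = a'.
  apply: (@eq_from_nth _ m0); first by rewrite size_map size_iota.
  move=> i; rewrite size_map size_iota => Hi.
  by rewrite (nth_map 0) ?size_iota // nth_iota // add0n; have [_ ->] := Hf i Hi.
have [psi Hpsi] := ren C sig phi.
have Hps : sat C (tv a e') psi by apply/Hpsi; rewrite key // Ha'.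
have Hp : forall j, j \in fv psi -> size a <= j -> B (e' j).
  move=> j _ Hj; rewrite /e'; case: ifP => H; last exact: MB.
  by apply: BB; apply: He; lia.
have [m [Hm1 Hm2 Hm3]] := Hfs psi e' Hp Hps.
  exists [seq nth m0 m (f i) | i <- iota 0 n']; split.
  - by rewrite size_map size_iota.
  - move=> x Hx; have [i [_ ->]] := In_map_inv Hx.
    by case: (nth_or m0 m (f i)) => [->|/Hm2].
  - by move/Hpsi: Hm3; rewrite key.
Qed.

Lemma fs_trans a x B : (forall z, M z -> B z) ->
  fs a (fun z => B z \/ z = x) M -> fs [:: x] B M -> fs (rcons a x) B M.
Proof.
move=> MB H1 H2; apply: fsE => // phi e He Hs.
set n := size a.
pose e1 := fun j => if j == n then x else e j.
have E1 : tv (rcons a x) e = tv a e1.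
  apply: functional_extensionality => j; rewrite !tv_def size_rcons nth_rcons /e1.
  case Hj1: (j < n); first by rewrite ltnS ltnW.
  case Hj2: (j == n); first by move/eqP: Hj2 => ->; rewrite ltnSn.
  by rewrite ifF //; lia.
rewrite E1 in Hs.
have Hp : forall j, j \in fv phi -> size a <= j -> B (e1 j) \/ e1 j = x.
  move=> j _ Hj; rewrite /e1; case: (j =P n) => [_|ne]; [by right | left].
  by apply: He; rewrite size_rcons; lia.
have [m [Hm1 Hm2 Hm3]] := H1 phi e1 Hp Hs.
pose sig := fun j => if j == n then 0 else j.+1.
pose e2 := fun k => if k.-1 == n then m0 else tv m e1 k.-1.
have key y : (fun j => tv [:: y] e2 (sig j)) = (fun j => if j == n then y else tv m e1 j).
  apply: functional_extensionality => j; rewrite /sig; case: (j =P n) => [//|ne] /=.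
  by rewrite {1}/Defs.tval /= /e2 /= nth_nil; case: (j =P n) => // E; case: ne.
have [psi Hpsi] := ren C sig phi.
have Hps : sat C (tv [:: x] e2) psi.
  apply/Hpsi; rewrite key.
  have -> : (fun j => if j == n then x else tv m e1 j) = tv m e1 => //.
  apply: functional_extensionality => j; case: (j =P n) => // ->.
  by rewrite tv_def Hm1 ltnn /e1 eqxx.
have Hp2 : forall j, j \in fv psi -> size [:: x] <= j -> B (e2 j).
  move=> j _ Hj; rewrite /e2; case: (j.-1 =P n) => [_|ne]; first exact: MB.
  rewrite tv_def; case: ifP => Hj'.
  - by apply: MB; case: (nth_or m0 m j.-1) => [->|/Hm2].
  - rewrite /e1 ifF; last by apply/eqP.
    by apply: He; rewrite size_rcons; move: Hj; rewrite /= => Hj; lia.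
have [m' [Hy1 Hy2 Hy3]] := H2 psi e2 Hp2 Hps.
case: m' Hy1 Hy2 Hy3 => [|y [|? ?]] //= _ Hy2 Hy3.
  exists (rcons m y); split.
  - by rewrite !size_rcons Hm1.
  - move=> z Hz; case/In_rcons: Hz => [/Hm2 //|->]; apply: Hy2; by left.
  - suff E3 : (fun j => if j == n then y else tv m e1 j) = tv (rcons m y) e.
      by move/Hpsi: Hy3; rewrite key E3.
    apply: functional_extensionality => j.
    rewrite !tv_def size_rcons nth_rcons Hm1 /e1.
    case: (j =P n) => [->|ne]; first by rewrite ltnSn ltnn.
    case Hj: (j < size a); first by rewrite ltnS ltnW.
    have : j != size a by apply/eqP.
    by rewrite ltnS leq_eqVlt Hj orbF => /negbTE ->.
Qed.

Lemma fs_params a B :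
  (forall w, (forall z, List.In z w -> B z) -> fs a (fun z => M z \/ List.In z w) M) ->
  fs a B M.
Proof.
move=> H phi e He Hs.
pose w := [seq e j | j <- fv phi & size a <= j].
apply: (H w) => //.
- move=> z Hz; have [j [/In_mem Hj ->]] := In_map_inv Hz; move: Hj.
  by rewrite mem_filter => /andP [H1 H2]; apply: He.
- move=> j Hj H1; right; apply: In_map; apply/In_mem.
  by rewrite mem_filter H1 Hj.
Qed.
End FS.

Section FS2.
Variables (L : signature) (C : structure L) (M : C -> Prop) (m0 : C) (Mm0 : M m0).
Hypothesis Hd : forall a b : seq C, fs b (fun x => M x \/ List.In x a) M ->
  forall c, fs b (fun x => (M x \/ List.In x a) \/ x = c) M \/
            fs (rcons b c) (fun x => M x \/ List.In x a) M.

Lemma P2 w a : (forall x, List.In x a -> fs [:: x] (fun z => M z \/ List.In z w) M) ->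
  fs a (fun z => M z \/ List.In z w) M.
Proof.
elim/last_ind: a => [|a x IH] H; first exact: fs_nil.
have Ha : fs a (fun z => M z \/ List.In z w) M.
  by apply: IH => z Hz; apply: H; apply/In_rcons; left.
case: (Hd Ha x) => // H1; apply: (fs_trans Mm0);
  [by move=> z Mz; left | exact: H1 | by apply: H; apply/In_rcons; right].
Qed.

Definition eqM (t t' : seq C) := forall phi e, (forall j, size t <= j -> M (e j)) ->
  (sat C (tv t e) phi <-> sat C (tv t' e) phi).

Lemma full_eqM D : full M D -> forall t : seq C,
  exists t', [/\ size t' = size t, (forall z, List.In z t' -> D z) & eqM t t'].
Proof.
move=> Hfull t.
pose p := fun phi e => (forall j, j \in fv phi -> size t <= j -> M (e j)) /\ sat C (tv t e) phi.
have Hc : complete_type (size t) M p.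
  split.
  - by move=> phi e [H _].
  - move=> phi e He; case: (classic (sat C (tv t e) phi)) => Hs; [left | right]; by split.
  - by move=> ps Hps; exists t; split => // q /Hps [_ ?].
have [t' [Ht1 Ht2 Ht3]] := Hfull _ _ Hc.
exists t'; split => // phi e He; split => Hs.
- by apply: Ht3; split => // j _; apply: He.
- apply: NNPP => Hn.
  have Hneg : p (FNeg phi) e by split => // j _; apply: He.
  by apply: (Ht3 _ _ Hneg).
Qed.

Lemma eqM_cons t t' x : eqM t t' -> size t' = size t -> M x -> eqM (x :: t) (x :: t').
Proof.
move=> H Hs Mx phi e He; set n := size t.
pose sig := fun k => if k == 0 then n else if k <= n then k.-1 else k.
pose e' := fun k => if k == n then x else e k.
have key s : size s = n -> (fun k => tv s e' (sig k)) = tv (x :: s) e.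
  move=> Hs'; apply: functional_extensionality => k; rewrite /sig.
  case: k => [|k] /=; first by rewrite (tv_def m0) Hs' ltnn /e' eqxx.
  rewrite [RHS](tv_def m0) /= ltnS Hs'.
  case: ifP => Hk.
  - by rewrite (tv_def m0) Hs' Hk.
  - rewrite (tv_def m0) Hs' ifF; last by lia.
    by rewrite /e' ifF //; apply/negbTE; rewrite neq_ltn; apply/orP; right; lia.
have [psi Hpsi] := ren C sig phi.
rewrite -(key t) // -(key t') // -!Hpsi.
apply: H => j Hj; rewrite /e'; case: eqP => // ne.
by apply: He => /=; rewrite -/n; lia.
Qed.

Ltac splitif := match goal with |- context [if ?b then _ else _] => case: (boolP b) => ? end.
Ltac closeit := solve [ done | lia | (f_equal; lia) ].

Lemma inv u t t' g psi B : (forall z, M z -> B z) -> fs u B M ->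
  (forall z, List.In z t -> B z) -> (forall z, List.In z t' -> B z) ->
  size t' = size t -> eqM t t' -> (forall k, M (g k)) ->
  sat C (tv (u ++ t) g) psi -> sat C (tv (u ++ t') g) psi.
Proof.
move=> MB Hfs Ht Ht' Hsz Heq Hg Hs; apply: NNPP => Hn.
pose sig0 := fun k => if k < size u + size t then k else k + size t.
pose sig1 := fun k => if k < size u then k else k + size t.
pose g' := fun j => g (j - size t).
have K0 s : size s = size u -> (fun k => tv (s ++ t ++ t') g' (sig0 k)) = tv (s ++ t) g.
  move=> Hs'; apply: functional_extensionality => k; rewrite /sig0 /g'.
  repeat splitif; rewrite !(tv_def m0) !size_cat !nth_cat; repeat splitif; closeit.
have K1 s : size s = size u -> (fun k => tv (s ++ t ++ t') g' (sig1 k)) = tv (s ++ t') g.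
  move=> Hs'; apply: functional_extensionality => k; rewrite /sig1 /g'.
  repeat splitif; rewrite !(tv_def m0) !size_cat !nth_cat; repeat splitif; closeit.
have [p0 Hp0] := ren C sig0 psi.
have [p1 Hp1] := ren C sig1 psi.
pose chi := FAnd p0 (FNeg p1).
pose E := tv (u ++ t ++ t') g'.
have HE s : size s = size u -> tv s E = tv (s ++ t ++ t') g'.
  move=> Hs'; apply: functional_extensionality => j; rewrite /E.
  repeat splitif; rewrite !(tv_def m0) !size_cat !nth_cat; repeat splitif; closeit.
have Hp : forall j, j \in fv chi -> size u <= j -> B (E j).
  move=> j _ Hj; rewrite /E (tv_def m0) !size_cat; case: ifP => Hj2; last exact: MB (Hg _).
  rewrite nth_cat ifF; last by lia.
  rewrite nth_cat; case: ifP => _.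
  - by case: (nth_or m0 t (j - size u)) => [->|/Ht //]; apply: MB.
  - by case: (nth_or m0 t' (j - size u - size t)) => [->|/Ht' //]; apply: MB.
have Hchi : sat C (tv u E) chi.
  rewrite HE //; split; first by apply/Hp0; rewrite K0.
  by move/Hp1; rewrite K1.
have [m [Hm1 Hm2 Hm3]] := Hfs chi E Hp Hchi.
rewrite HE // in Hm3; case: Hm3 => /Hp0 A /Hp1 B'; rewrite K0 // in A.
rewrite K1 // in B'.
pose tau := fun k => if k < size u then size t + k
  else if k < size u + size t then k - size u else size t + k.
pose h := fun j => if j - size t < size u then nth m0 m (j - size t) else g (j - size t).
have K2 s : size s = size t -> (fun k => tv s h (tau k)) = tv (m ++ s) g.
  move=> Hs'; apply: functional_extensionality => k; rewrite /tau /h.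
  repeat splitif; rewrite !(tv_def m0) !size_cat !nth_cat; repeat splitif; closeit.
have [p2 Hp2] := ren C tau psi.
have Hh : forall j, size t <= j -> M (h j).
  move=> j _; rewrite /h; case: ifP => _ //.
  by case: (nth_or m0 m (j - size t)) => [->|/Hm2].
have := Heq p2 h Hh; rewrite !Hp2 K2 // K2 // => X.
by apply: B'; apply/X.
Qed.
End FS2.

Section FS3.
Variables (L : signature) (C : structure L) (M : C -> Prop) (m0 : C) (Mm0 : M m0).
Hypothesis Hd : forall a b : seq C, fs b (fun x => M x \/ List.In x a) M ->
  forall c, fs b (fun x => (M x \/ List.In x a) \/ x = c) M \/
            fs (rcons b c) (fun x => M x \/ List.In x a) M.

Lemma step (D : C -> Prop) b' x y : (forall z, M z -> D z) -> full M D ->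
  fs [:: x] (fun z => D z \/ List.In z b') M -> fs [:: x] (fun z => D z \/ z = y) M ->
  fs [:: x] (fun z => (D z \/ List.In z b') \/ z = y) M.
Proof.
move=> MD Hfull H1 H2.
set B1 := fun z => D z \/ List.In z b'.
have MB1 : forall z, M z -> B1 z by move=> z Mz; left; apply: MD.
apply: fs_params => w Hw phi e He Hs; apply: NNPP => Hno.
have [R0 [HR1 HR2]] : exists R0, (forall z, List.In z R0 -> B1 z) /\
    (forall z, List.In z w -> List.In z R0 \/ z = y).
  elim: w Hw {He} => [|z w IH] Hw; first by exists [::].
  have [R [HR1 HR2]] := IH (fun z' Hz' => Hw z' (or_intror Hz')).
  case: (classic (B1 z)) => Hz.
  - exists (z :: R); split; first by move=> z' [<-|/HR1].
    by move=> z' [<-|/HR2 [H|H]]; [left; left | left; right | right].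
  - exists R; split => // z' [<-|/HR2 //].
    by case: (Hw z (or_introl erefl)) => [/Hz []|->]; right.
have HA : fs [:: x; y] B1 M.
  apply: fs_params => w' Hw'.
  have HR : fs [:: x] (fun z => M z \/ List.In z (R0 ++ w')) M.
    apply: fs_mono H1 => z [Mz|/In_cat [/HR1 //|/Hw' //]]; by left; apply: MD.
  case: (Hd HR y) => Hc.
  - exfalso; apply: Hno; apply: (Hc phi e) => // j Hj Hj1.
    case: (He j Hj Hj1) => [Mz|/HR2 [Hz|->]]; [by left; left | | by right].
    by left; right; apply/In_cat; left.
  - by apply: fs_mono Hc => z [Mz|Hz]; [left | right; apply/In_cat; right].
have HB : fs [:: y] B1 M.
  apply: (fs_reindex Mm0 (f := fun _ => 1)) HA => //.
  by case=> [|i] //.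
pose N := (size R0).+2.
pose sig := fun j => if j == 0 then 0 else if dec (e j = y) then 1 else
  if dec (exists k, k < size R0 /\ nth m0 R0 k = e j)
  then (epsilon (inhabits 0) (fun k => k < size R0 /\ nth m0 R0 k = e j)).+2
  else N + j.
pose g := fun k => if dec (M (e (k - N))) then e (k - N) else m0.
have Hg : forall k, M (g k).
  move=> k; rewrite /g; case: (classic (M (e (k - N)))) => H.
  - by rewrite decT.
  - by rewrite decF.
have [psi Hpsi] := ren C sig phi.
have key z : sat C (tv [:: z, y & R0] g) psi <-> sat C (tv [:: z] e) phi.
  rewrite Hpsi; apply: coin => j Hj; rewrite /sig.
  case: j Hj => [|j] Hj //.
  rewrite /=.
  case: (classic (e j.+1 = y)) => Hy; first by rewrite decT // !(tv_def m0) /= Hy.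
  rewrite decF //.
  case: (classic (exists k, k < size R0 /\ nth m0 R0 k = e j.+1)) => Hex.
  - rewrite decT //.
    have [Hk1 Hk2] := epsilon_spec (inhabits 0) _ Hex.
    by rewrite !(tv_def m0) /= !ltnS Hk1 Hk2.
  - rewrite decF //.
    have HM : M (e j.+1).
      case: (He j.+1 Hj isT) => // Hw2.
      case: (HR2 _ Hw2) => [/(In_nth_ex m0) [k [Hk1 Hk2]]|Hy2].
      + by case: Hex; exists k.
      + by case: Hy.
    rewrite !(tv_def m0) /= ifF; last by rewrite /N; lia.
    by rewrite /g (_ : N + j.+1 - N = j.+1) ?decT //; lia.
have Hx : sat C (tv [:: x, y & R0] g) psi by apply/key.
have Hm : forall m, M m -> ~ sat C (tv [:: m, y & R0] g) psi.
  move=> m Mm /key Hsm; apply: Hno; exists [:: m]; split => //.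
  by move=> z [<-|[]].
have [R1 [HR1s HR1D HR1e]] := full_eqM Hfull R0.
have HxE : sat C (tv ([:: x; y] ++ R1) g) psi.
  apply: (inv Mm0 (t := R0) MB1 HA) => //.
  by move=> z /HR1D Hz; left.
pose e2 := fun j => nth (g j) [:: x, y & R1] j.
have He2 z : tv [:: z] e2 = tv [:: z, y & R1] g.
  apply: functional_extensionality => j; case: j => [|j] //.
  by rewrite /Defs.tval /= nth_nil /e2.
have Hp2 : forall j, j \in fv psi -> size [:: x] <= j -> D (e2 j) \/ e2 j = y.
  move=> j _; case: j => [|[|j]] // _; first by right.
  rewrite /e2 /=; case: (nth_or (g j.+2) R1 j) => [->|/HR1D]; last by left.
  by left; apply: MD.
have [m' [Hm1 Hm2 Hm3]] := H2 psi e2 Hp2 (eq_ind_r (fun E => sat C E psi) HxE (He2 x)).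
case: m' Hm1 Hm2 Hm3 => [|m [|? ?]] //= _ Hm2 Hm3.
have Mm : M m by apply: Hm2; left.
rewrite He2 in Hm3.
pose sw := fun k => if k == 0 then 1 else if k == 1 then 0 else k.
have [chi Hchi] := ren C sw (FNeg psi).
have Hsw : forall z z' (s : seq C), (fun k => tv [:: z, z' & s] g (sw k)) = tv [:: z', z & s] g.
  by move=> z z' s; apply: functional_extensionality => k; case: k => [|[|k]].
have T1 : forall z, List.In z (m :: R0) -> B1 z.
  by move=> z [<-|/HR1 //]; exact: MB1 Mm.
have T2 : forall z, List.In z (m :: R1) -> B1 z.
  by move=> z [<-|/HR1D Hz]; [exact: MB1 Mm | left].
have Hsz' : size (m :: R1) = size (m :: R0) by rewrite /= HR1s.
have Hc1 : sat C (tv ([:: y] ++ m :: R0) g) chi.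
  by apply/Hchi; rewrite Hsw /=; apply: Hm.
have := inv Mm0 MB1 HB T1 T2 Hsz' (eqM_cons m0 HR1e HR1s Mm) Hg Hc1.
move/Hchi; rewrite Hsw /=; apply.
exact: Hm3.
Qed.
End FS3.


Unset Implicit Arguments.
Theorem lemma3 (L : signature) (C : structure L) (K : Type) :
  monster C K -> fs_dichotomy C K ->
  forall M : C -> Prop, small_model K M ->
  forall (a b : seq C) (c : C), 0 < size a -> 0 < size b ->
  [/\ (~ fs a (fun x => M x \/ x = c) M ->
       ~ fs [:: c] (fun x => M x \/ List.In x b) M ->
       ~ fs a (fun x => M x \/ List.In x b) M),
      (fs a (fun x => M x \/ List.In x b) M <->
       forall x, List.In x a -> fs [:: x] (fun z => M z \/ List.In z b) M)
    & forall D : C -> Prop, (forall x, M x -> D x) -> full M D ->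
       (fs a (fun x => D x \/ List.In x b) M <->
        forall x y, List.In x a -> List.In y b ->
          fs [:: x] (fun z => D z \/ z = y) M)].
Proof.
move=> _ Hdich M HM a b c Ha Hb.
have Hd := Hdich M HM.
have [m0 Mm0] : exists m0, M m0 by case: HM => _ [_ [H _]].
split.
- move=> N1 N2 H; case: (Hd b a H c) => Hc.
  + by apply: N1; apply: fs_mono Hc => z [Mz|->]; [left; left | right].
  + apply: N2; apply: (fs_reindex Mm0 (f := fun _ => size a)
      (fun z Mz => or_introl Mz) (fun z Mz => or_introl Mz) (fun z Hz => Hz)) Hc.
    by case=> [|i] // _; rewrite size_rcons ltnSn nth_rcons ltnn eqxx.
- split.
  + move=> H x Hx; have [i [Hi Hxi]] := In_nth_ex m0 Hx.
    apply: (fs_reindex Mm0 (f := fun _ => i)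
      (fun z Mz => or_introl Mz) (fun z Mz => or_introl Mz) (fun z Hz => Hz)) H.
    by case=> [|k] // _; rewrite Hxi.
    exact: (@P2 _ _ M m0 Mm0 Hd b a).
- move=> D MD Hfull; split.
  + move=> H x y Hx Hy; have [i [Hi Hxi]] := In_nth_ex m0 Hx.
    apply: (fs_reindex Mm0 (f := fun _ => i)) H.
    * by move=> z Mz; left; apply: MD.
    * by move=> z Mz; left; apply: MD.
    * by move=> z [Dz|->]; [left | right].
    * by case=> [|k] // _; rewrite Hxi.
  + move=> H.
    have Hx : forall x, List.In x a -> fs [:: x] (fun z => D z \/ List.In z b) M.
      move=> x Hxa.
      suff S : forall b', (forall z, List.In z b' -> List.In z b) ->
          fs [:: x] (fun z => D z \/ List.In z b') M by apply: S.
      elim/last_ind => [|b' y IH] Hb'.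
      * have [y0 Hy0] : exists y0, List.In y0 b.
          by destruct b as [|y0 b0]; [done | exists y0; left].
        by apply: fs_mono (H x y0 Hxa Hy0) => z [Dz|[]]; left.
      * have Hb1 : forall z, List.In z b' -> List.In z b.
          by move=> z Hz; apply: Hb'; apply/In_rcons; left.
        have Hy : List.In y b by apply: Hb'; apply/In_rcons; right.
        have S1 := step Mm0 Hd MD Hfull (IH Hb1) (H x y Hxa Hy).
        apply: fs_mono S1 => z [Dz|/In_rcons [Hz|->]]; [by left; left | by left; right | by right].
    apply: fs_params => w Hw; apply: (P2 Mm0 Hd) => x Hxa.
    by apply: fs_mono (Hx x Hxa) => z [Mz|Hz]; [left; apply: MD | apply: Hw].
Qed.
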